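(* Let $G$ be a finite connected $k$-regular simple graph on $n\ge 2$ vertices. Then $$h(G) < k\,\lambda(G)\sqrt{\frac{n}{\lfloor n/2\rfloor}}.$$
   Context: For a finite simple connected graph $G=(V,E)$ on $n$ vertices, the expansion constant is $h(G)=\min\{|\partial F|/|F| : F\subset V,\ 0<|F|\le n/2\}$, where $\partial F$ is the set of edges joining a vertex of $F$ to a vertex of $V\setminus F$. An $L(2,1)$-colouring of $G$ is a map $f:V\to\mathbb{Z}_{\ge 0}$ with $|f(u)-f(v)|\ge 2$ whenever $u,v$ are adjacent and $|f(u)-f(v)|\ge 1$ whenever $u,v$ are at distance two. Its span is $\max f-\min f$, and $\lambda(G)$ denotes the minimum span over all $L(2,1)$-colourings of $G$. *)

(* Defs.v *)
From mathcomp Require Import all_boot all_order all_algebra.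
Set Implicit Arguments. Unset Strict Implicit. Unset Printing Implicit Defensive.
Import Order.TTheory GRing.Theory Num.Theory.

Definition simple_graph (T : finType) (e : rel T) : Prop :=
  symmetric e /\ irreflexive e.

Definition connected_graph (T : finType) (e : rel T) : Prop :=
  forall x y : T, connect e x y.

Definition regular (T : finType) (e : rel T) (k : nat) : Prop :=
  forall x : T, #|[set y | e x y]| = k.

(* |boundary F| : number of edges with one end in F and the other outside;
   each such edge is counted once as the ordered pair (inside, outside). *)
Definition boundary_size (T : finType) (e : rel T) (F : {set T}) : nat :=
  #|[set p : T * T | [&& p.1 \in F, p.2 \notin F & e p.1 p.2]]|.

Definition expansion_ratio (R : numFieldType) (T : finType) (e : rel T)
  (F : {set T}) : R :=
  ((boundary_size e F)%:R / #|F|%:R)%R.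

(* The neutral element
   (#|T|^2 + 1) is >= every ratio (|dF| <= #|T|^2, |F| >= 1), so it never
   affects the minimum as soon as an admissible F exists (n >= 2). *)
Definition expansion (R : realFieldType) (T : finType) (e : rel T) : R :=
  \big[Order.min/((#|T| ^ 2).+1)%:R%R]_(F : {set T} | (0 < #|F|) && (#|F| <= #|T| %/ 2))
    expansion_ratio R e F.

Definition dist2 (T : finType) (e : rel T) (u v : T) : bool :=
  [&& u != v, ~~ e u v & [exists w, e u w && e w v]].

Definition L21_colouring (T : finType) (e : rel T) (f : T -> nat) : Prop :=
  (forall u v, e u v -> (2 <= absz ((f u)%:Z - (f v)%:Z)%R)%N) /\
  (forall u v, dist2 e u v -> (1 <= absz ((f u)%:Z - (f v)%:Z)%R)%N).

Definition span (T : finType) (f : T -> nat) : nat :=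
  \max_(x : T) f x - \big[minn/(\max_(y : T) f y)]_(x : T) f x.

Definition is_lambda (T : finType) (e : rel T) (l : nat) : Prop :=
  (exists f : T -> nat, L21_colouring e f /\ span f = l) /\
  (forall f : T -> nat, L21_colouring e f -> l <= span f).

(* Main.v *)
Require Import Defs.
From mathcomp Require Import all_boot all_order all_algebra.
Import Order.TTheory GRing.Theory Num.Theory.
From mathcomp Require Import zify.
Local Open Scope ring_scope.

Lemma bigminn_le (T : eqType) (r : seq T) (M : nat) (f : T -> nat) u :
  u \in r -> (\big[minn/M]_(x <- r) f x <= f u)%N.
Proof.
elim: r => [//|a r IH]; rewrite inE big_cons => /orP [/eqP->|/IH H].
  exact: geq_minl.
exact: leq_trans (geq_minr _ _) H.
Qed.

Lemma span_ge (T : finType) (f : T -> nat) u v :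
  (absz ((f u)%:Z - (f v)%:Z) <= Defs.span f)%N.
Proof.
rewrite /Defs.span.
have mu := @bigminn_le _ (index_enum T) (\max_(y : T) f y) f u (mem_index_enum u).
have mv := @bigminn_le _ (index_enum T) (\max_(y : T) f y) f v (mem_index_enum v).
have Mu := leq_bigmax (F := f) u.
have Mv := leq_bigmax (F := f) v.
case: (leqP (f u) (f v)) => h.
  rewrite distnC distnEl //; exact: leq_sub Mv mu.
rewrite distnEl; [exact: leq_sub Mu mv | exact: ltnW].
Qed.

Theorem theorem2p2 (R : rcfType) (T : finType) (e : rel T) (k l : nat) :
  simple_graph e -> connected_graph e -> regular e k ->
  (2 <= #|T|)%N -> is_lambda e l ->
  expansion R e < k%:R * l%:R * Num.sqrt (#|T|%:R / (#|T| %/ 2)%:R).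
Proof.
move=> [esym eirr] conn reg n2 [[f [[fe _] fspan]] _].
have [x [y xy]] : exists x y : T, x != y.
  have: (1 < #|T|)%N by [].
  rewrite -(cardsT T) => /card_gt1P [x [y [_ _ h]]]; by exists x, y.
have [z exz] : exists z, e x z.
  move: (conn x y) => /connectP [[|z p] /= pth yl].
    by move: xy; rewrite yl eqxx.
  by exists z; case/andP: pth.
have k1 : (1 <= k)%N.
  rewrite -(reg x); apply/card_gt0P; exists z; by rewrite inE.
have l2 : (2 <= l)%N.
  rewrite -fspan; have := @span_ge _ f x z; have := fe _ _ exz; exact: leq_trans.
have hk : expansion R e <= k%:R.
  rewrite /expansion.
  have P1 : ((0 < #|[set x]|) && (#|[set x]| <= #|T| %/ 2))%N.
    by rewrite cards1 /= divn_gt0.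
  have := @bigmin_le_cond _ R _ ((#|T| ^ 2).+1)%:R [set x] (fun F : {set T} => (0 < #|F|) && (#|F| <= #|T| %/ 2))%N (expansion_ratio R e) P1.
  move=> H; apply: le_trans H _.
  rewrite /expansion_ratio cards1 divr1 ler_nat -(reg x).
  apply: leq_trans (leq_imset_card (fun w => (x, w)) [set w | e x w]).
  apply: subset_leq_card; apply/subsetP => -[a b]; rewrite !inE /= => /and3P [/eqP -> _ hb].
  by apply/imsetP; exists b; rewrite ?inE.
apply: le_lt_trans hk _.
have s1 : 1 <= Num.sqrt (#|T|%:R / (#|T| %/ 2)%:R : R).
  rewrite -[X in X <= _]sqrtr1 ler_sqrt ?divr_ge0 ?ler0n //.
  have h0 : (0 < #|T| %/ 2)%N by rewrite divn_gt0.
  rewrite ler_pdivlMr ?ltr0n // mul1r ler_nat; exact: leq_div.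
have kpos : (0 : R) < k%:R by rewrite ltr0n.
apply: (@lt_le_trans _ _ (k%:R * l%:R)).
  rewrite -natrM ltr_nat; nia.
rewrite -{1}(mulr1 (k%:R * l%:R)); apply: ler_wpM2l => //.
by rewrite -natrM ler0n.
Qed.
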